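(* If $\mathfrak{p}=\mathfrak{c}$, then every almost disjoint family of size less than $\mathfrak{c}$ can be extended to a strongly tight MAD family.
   Context: An almost disjoint (AD) family is a family of infinite subsets of $\omega$ with pairwise finite intersections; MAD means maximal AD. $\mathcal{I}(\mathcal{A})$ is the ideal generated by $\mathcal{A}$ and the finite sets. An ideal $\mathcal{I}$ is strongly tight if for every $\{X_n:n\in\omega\}\subseteq[\omega]^\omega$ such that $\{n:X_n\subseteq^*Y\}$ is finite for every $Y\in\mathcal{I}$, there is $A\in\mathcal{I}$ with $A\cap X_n\ne\emptyset$ for all $n$; $\mathcal{A}$ is strongly tight if $\mathcal{I}(\mathcal{A})$ is. $\mathfrak{p}$ is the pseudointersection number. *)

(* Defs.v *)
From HB Require Import structures.
From mathcomp Require Import all_boot.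
From mathcomp Require Import boolp classical_sets functions cardinality.
Set Implicit Arguments. Unset Strict Implicit. Unset Printing Implicit Defensive.
Local Open Scope classical_set_scope.

Definition almost_sub (A B : set nat) : Prop := finite_set (A `\` B).

Definition AD (F : set (set nat)) : Prop :=
  (forall A, F A -> infinite_set A) /\
  (forall A B, F A -> F B -> A <> B -> finite_set (A `&` B)).

Definition MAD (F : set (set nat)) : Prop :=
  AD F /\ (forall G, AD G -> F `<=` G -> G = F).

Definition gen_ideal (F : set (set nat)) : set (set nat) :=
  [set Y | exists (G : set (set nat)) (K : set nat),
     [/\ finite_set G, G `<=` F, finite_set K &
         Y `<=` (\bigcup_(A in G) A) `|` K]].

Definition strongly_tight_ideal (I : set (set nat)) : Prop :=
  forall X : nat -> set nat,
    (forall n, infinite_set (X n)) ->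
    (forall Y, I Y -> finite_set [set n | almost_sub (X n) Y]) ->
    exists A, I A /\ forall n, X n `&` A !=set0.

Definition strongly_tight (F : set (set nat)) : Prop :=
  strongly_tight_ideal (gen_ideal F).

(* |F| < c for F a family of subsets of omega (so |F| <= c automatically):
   there is no injection of P(omega) into F. *)
Definition lt_continuum (F : set (set nat)) : Prop :=
  ~ exists f : set nat -> set nat, injective f /\ (forall X, F (f X)).

Definition SFIP (F : set (set nat)) : Prop :=
  forall G : set (set nat), finite_set G -> G `<=` F -> G !=set0 ->
    infinite_set (\bigcap_(A in G) A).

Definition has_pseudointersection (F : set (set nat)) : Prop :=
  exists P : set nat, infinite_set P /\ forall A, F A -> almost_sub P A.

(* p = c : since p <= c always, p = c says no family of size < c
   witnesses the definition of p, i.e. every family F of infinite sets of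
   size < c with SFIP has an infinite pseudointersection. *)
Definition p_eq_c : Prop :=
  forall F : set (set nat), lt_continuum F ->
    (forall A, F A -> infinite_set A) -> SFIP F -> has_pseudointersection F.

(* Main.v *)
Require Import Defs.
From mathcomp Require Import all_boot.
From mathcomp Require Import boolp classical_sets functions cardinality.
From mathcomp Require Import wochoice.
From Stdlib Require Cantor.
From Stdlib Require Import Lia.
Local Open Scope classical_set_scope.

Lemma choiceP (X Y : Type) (P : X -> Y -> Prop) :
  (forall x, exists y, P x y) -> exists f : X -> Y, forall x, P x (f x).
Proof. by move=> /choice[f hf]; exists f. Qed.

Lemma fin_bound (A : set nat) : finite_set A -> exists m, forall x, A x -> (x < m)%N.
Proof.
move=> /finite_fsetP[X ->]; exists (\max_(x <- finmap.enum_fset X) x).+1 => x /= xX.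
rewrite ltnS; exact: (@leq_bigmax_seq _ _ predT (fun y => y)).
Qed.

Lemma bound_fin (A : set nat) m : (forall x, A x -> (x < m)%N) -> finite_set A.
Proof. move=> h; by apply: (sub_finite_set (B:=`I_m)) => // x /h. Qed.

Lemma unbounded_inf (A : set nat) :
  (forall m, exists x, (m <= x)%N /\ A x) -> infinite_set A.
Proof.
move=> h /fin_bound[m hm]; have [x [mx Ax]] := h m.
by have := hm _ Ax; rewrite ltnNge mx.
Qed.

Lemma inf_unbounded (A : set nat) : infinite_set A ->
  forall m, exists x, (m <= x)%N /\ A x.
Proof.
move=> h m; apply: contra_notP h => H; apply: (@bound_fin _ m) => x Ax.
rewrite ltnNge; apply/negP => mx; apply: H; by exists x.
Qed.

Lemma ltc_sub (F G : set (set nat)) : F `<=` G -> lt_continuum G -> lt_continuum F.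
Proof. move=> FG hG [f [fi fF]]; apply: hG; exists f; split=> // X; exact: FG. Qed.

Lemma ltc_image (D : set (set nat)) (phi : set nat -> set nat) :
  lt_continuum D -> lt_continuum (phi @` D).
Proof.
move=> hD [f [fi fF]].
have [g hg] : exists g : set nat -> set nat, forall X, D (g X) /\ phi (g X) = f X.
  apply: (@choiceP _ _ (fun X Y => D Y /\ phi Y = f X)) => X.
  by have [Y DY e] := fF X; exists Y.
apply: hD; exists g; split; last by move=> X; case: (hg X).
move=> X X' e; apply: fi; rewrite -(hg X).2 -(hg X').2 e //.
Qed.

Lemma no_inj_nat (g : set nat -> nat) : ~ injective g.
Proof.
move=> gi; pose D := [set n | exists X, g X = n /\ ~ X n].
have [h|h] := pselect (D (g D)).
  case: (h) => X [e nX]; have XD := gi _ _ e; by rewrite XD in nX.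
by apply: (h); exists D; split.
Qed.

Lemma ltc_range (E : nat -> set nat) : lt_continuum (range E).
Proof.
move=> [f [fi fF]].
have [g hg] : exists g : set nat -> nat, forall X, E (g X) = f X.
  apply: (@choiceP _ _ (fun X n => E n = f X)) => X.
  by have [n _ e] := fF X; exists n.
apply: (@no_inj_nat g) => X X' e; apply: fi; by rewrite -hg -(hg X') e.
Qed.

Lemma set0_neq_setT : (set0 : set nat) <> setT.
Proof. move=> /(congr1 (fun S : set nat => S 0%N)) => /= e; by rewrite e. Qed.

Lemma ltc_set1 (Z : set nat) : lt_continuum [set Z].
Proof.
move=> [f [fi fF]]; apply: set0_neq_setT; apply: fi.
by rewrite (fF set0) (fF setT).
Qed.

Definition enc2 (X Y : set nat) : set nat :=
  [set p | let q := Cantor.of_nat p in if q.1 is 0 then X q.2 else Y q.2].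

Arguments Cantor.to_nat : simpl never.
Arguments Cantor.of_nat : simpl never.

Lemma enc2_inj X Y X' Y' : enc2 X Y = enc2 X' Y' -> X = X' /\ Y = Y'.
Proof.
move=> e; split; apply/funext => j.
  have := congr1 (fun S => S (Cantor.to_nat (0%N, j))) e.
  by rewrite /enc2 /= Cantor.cancel_of_to.
have := congr1 (fun S => S (Cantor.to_nat (1%N, j))) e.
by rewrite /enc2 /= Cantor.cancel_of_to.
Qed.

Lemma ltc_union (F G : set (set nat)) :
  lt_continuum F -> lt_continuum G -> lt_continuum (F `|` G).
Proof.
move=> hF hG [f [fi fF]].
have [[X hX]|hX] := pselect (exists X, forall Y, F (f (enc2 X Y))).
  apply: hF; exists (fun Y => f (enc2 X Y)); split => // Y Y' e.
  by have [] := @enc2_inj _ _ _ _ (fi _ _ e).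
have hX' : forall X, exists Y, G (f (enc2 X Y)).
  move=> X; apply: contra_notP hX => H; exists X => Y.
  case: (fF (enc2 X Y)) => // gY; exfalso; apply: H; by exists Y.
have [y hy] := choiceP _ _ _ hX'.
apply: hG; exists (fun X => f (enc2 X (y X))); split => // X X' e.
by have [] := @enc2_inj _ _ _ _ (fi _ _ e).
Qed.

Lemma to_nat_ge2 x y : (y <= Cantor.to_nat (x, y))%N.
Proof. apply/leP; have := Cantor.to_nat_non_decreasing x y; lia. Qed.

Lemma of_nat_fst_le p : ((Cantor.of_nat p).1 <= p)%N.
Proof.
rewrite -{2}(Cantor.cancel_to_of p); case: (Cantor.of_nat p) => x y /=.
apply/leP; have := Cantor.to_nat_non_decreasing x y; lia.
Qed.

Lemma fin_uniform (T : Type) (G : set T) (P : T -> nat -> Prop) :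
  finite_set G -> (forall V, G V -> exists c, forall k, (c <= k)%N -> P V k) ->
  exists c, forall V, G V -> forall k, (c <= k)%N -> P V k.
Proof.
move=> Gf h.
have [cf hc] := choiceP _ _ (fun V c => G V -> forall k, (c <= k)%N -> P V k)
  (fun V => match pselect (G V) with
            | left GV => let: ex_intro c hc := h V GV in ex_intro _ c (fun _ => hc)
            | right nGV => ex_intro _ 0%N (fun GV => False_ind _ (nGV GV)) end).
have [M hM] := fin_bound _ (finite_image cf Gf).
exists M => V GV k Mk; apply: hc => //.
by apply: leq_trans (ltnW (hM _ _)) Mk; exists V.
Qed.

Lemma colbound (h : nat -> nat) i : exists c, forall j, (j <= i)%N -> (h j < c)%N.
Proof.
elim: i => [|i [c hc]]; first by exists (h 0%N).+1 => j; rewrite leqn0 => /eqP->.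
exists (maxn c (h i.+1).+1) => j; rewrite leq_eqVlt => /orP[/eqP->|ji].
  by rewrite leq_max leqnn orbT.
by rewrite leq_max hc.
Qed.

Lemma dominate (pc : p_eq_c) (I : set (set nat)) (f : set nat -> nat -> nat) :
  lt_continuum I -> exists g : nat -> nat, forall B, I B ->
    exists N, forall n, (N <= n)%N -> (f B n < g n)%N.
Proof.
move=> ltI.
pose U B := [set p | forall j, (j <= (Cantor.of_nat p).1)%N -> (f B j < (Cantor.of_nat p).2)%N].
pose E m := [set p | (m <= (Cantor.of_nat p).1)%N].
pose F := U @` I `|` range E.
have ltF : lt_continuum F by apply: ltc_union; [apply: ltc_image | apply: ltc_range].
have colU : forall B i, exists c, forall k, (c <= k)%N -> U B (Cantor.to_nat (i, k)).
  move=> B i; have [c hc] := colbound (f B) i; exists c => k ck j.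
  rewrite Cantor.cancel_of_to /= => ji; exact: leq_trans (hc _ ji) ck.
have colE : forall m i k, (m <= i)%N -> E m (Cantor.to_nat (i, k)).
  by move=> m i k mi; rewrite /E /= Cantor.cancel_of_to.
have infF : forall V, F V -> infinite_set V.
  move=> V [[B _ <-]|[m _ <-]]; apply: unbounded_inf => m0.
    have [c hc] := colU B 0%N; exists (Cantor.to_nat (0%N, maxn c m0)); split.
      by apply: leq_trans (to_nat_ge2 _ _); rewrite leq_max leqnn orbT.
    by apply: hc; rewrite leq_max leqnn.
  exists (Cantor.to_nat (m, m0)); split; first exact: to_nat_ge2.
  exact: colE.
have sfip : SFIP F.
  move=> G Gf GF _.
  have h1 : forall V, G V -> exists c, forall i, (c <= i)%N ->
      exists c', forall k, (c' <= k)%N -> V (Cantor.to_nat (i, k)).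
    move=> V /GF [[B _ <-]|[m _ <-]].
      by exists 0%N => i _; apply: colU.
    by exists m => i mi; exists 0%N => k _; apply: colE.
  have [c0 hc0] := @fin_uniform _ _ _ Gf h1.
  have h2 : forall V, G V -> exists c', forall k, (c' <= k)%N -> V (Cantor.to_nat (c0, k)).
    by move=> V GV; apply: (hc0 V GV).
  have [c1 hc1] := @fin_uniform _ _ _ Gf h2.
  apply: unbounded_inf => m0; exists (Cantor.to_nat (c0, maxn c1 m0)); split.
    by apply: leq_trans (to_nat_ge2 _ _); rewrite leq_max leqnn orbT.
  by move=> V GV; apply: hc1 => //; rewrite leq_max leqnn.
have [Q [Qinf QF]] := pc F ltF infF sfip.
have exQ : forall n, exists p, Q p /\ (n <= (Cantor.of_nat p).1)%N.
  move=> n; apply: contra_notP Qinf => H.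
  have : almost_sub Q (E n) by apply: QF; right; exists n.
  apply: sub_finite_set => p Qp; split => // Ep; apply: H; by exists p.
have [pn hpn] := choiceP _ _ _ exQ.
exists (fun n => (Cantor.of_nat (pn n)).2) => B IB.
have [N hN] := fin_bound _ (QF (U B) (or_introl (ex_intro2 _ _ B IB erefl))).
exists N => n Nn; have [Qp np] := hpn n.
have UB : U B (pn n).
  have [//|nU] := pselect (U B (pn n)); exfalso.
  have := hN _ (conj Qp nU).
  by rewrite ltnNge (leq_trans Nn (leq_trans np (of_nat_fst_le _))).
exact: UB n np.
Qed.

Lemma fin_sub (A B : set nat) : finite_set B -> A `<=` B -> finite_set A.
Proof. by move=> fB AB; apply: sub_finite_set fB. Qed.

Lemma fin_subT (T : Type) (A B : set T) : finite_set B -> A `<=` B -> finite_set A.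
Proof. by move=> fB AB; apply: sub_finite_set fB. Qed.

Lemma finU (T : Type) (A B : set T) : finite_set A -> finite_set B -> finite_set (A `|` B).
Proof. by move=> fA fB; rewrite finite_setU. Qed.
Arguments fin_sub {A B}. Arguments fin_subT {T A B}. Arguments finU {T A B}.

Lemma nat_min (P : nat -> Prop) : (exists m, P m) -> exists t, P t /\ forall m, P m -> (t <= m)%N.
Proof.
move=> [m0 Pm0]; have [//|H] := pselect (exists t, P t /\ forall m, P m -> (t <= m)%N); exfalso.
suff : forall n m, (m <= n)%N -> ~ P m by move/(_ m0 m0 (leqnn _)).
elim=> [|n IH] m.
  rewrite leqn0 => /eqP-> P0; apply: H; exists 0%N; split => // k _.
rewrite leq_eqVlt => /orP[/eqP->|]; last by rewrite ltnS; apply: IH.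
move=> Pn; apply: H; exists n.+1; split => // k Pk.
by rewrite ltnNge; apply/negP => kn; apply: (IH k kn Pk).
Qed.

Lemma nat_max (P : nat -> Prop) n : (forall y, P y -> (y <= n)%N) ->
  (exists x, P x) -> exists x, P x /\ forall y, P y -> (y <= x)%N.
Proof.
elim: n => [|n IH] hb hx.
  case: hx => x Px; exists x; split => // y /hb; rewrite leqn0 => /eqP->.
  done.
have [Pn|nPn] := pselect (P n.+1).
  by exists n.+1; split.
apply: IH => // y Py; have := hb y Py; rewrite leq_eqVlt => /orP[/eqP e|//].
by rewrite e in Py.
Qed.

Lemma gen_ideal_bigcup (B H : set (set nat)) :
  finite_set H -> H `<=` B -> gen_ideal B (\bigcup_(b in H) b).
Proof.
move=> Hf HB; exists H, set0; split => //; try exact: finite_set0.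
all: by move=> x hx; left.
Qed.

Lemma gen_ideal1 (B : set (set nat)) b : B b -> gen_ideal B b.
Proof.
move=> Bb; exists [set b], set0; split => //; try exact: finite_set1; try exact: finite_set0.
  by move=> c ->.
by move=> x bx; left; exists b.
Qed.

Lemma gen_ideal0 (B : set (set nat)) : gen_ideal B set0.
Proof.
exists set0, set0; split => //; try exact: finite_set0.
Qed.

Lemma good_piece (pc : p_eq_c) (B : set (set nat)) (Xn : set nat) :
  lt_continuum B -> (forall Y, gen_ideal B Y -> ~ almost_sub Xn Y) ->
  exists P, [/\ P `<=` Xn, infinite_set P & forall b, B b -> finite_set (P `&` b)].
Proof.
move=> ltB hX.
pose F := (fun b => Xn `\` b) @` B `|` [set Xn].
have ltF : lt_continuum F by apply: ltc_union; [apply: ltc_image | apply: ltc_set1].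
have infF : forall V, F V -> infinite_set V.
  move=> V [[b Bb <-]|->].
    exact: (hX b (gen_ideal1 _ _ Bb)).
  by have := hX set0 (gen_ideal0 B); rewrite /almost_sub setD0.
have sfip : SFIP F.
  move=> G Gf GF _.
  have [bf hbf] := choiceP _ _ (fun V b => (exists2 b0, B b0 & Xn `\` b0 = V) -> B b /\ Xn `\` b = V)
    (fun V => match pselect (exists2 b0, B b0 & Xn `\` b0 = V) with
      | left h => let: ex_intro2 b0 h1 h2 := h in ex_intro _ b0 (fun _ => conj h1 h2)
      | right h => ex_intro _ set0 (fun h' => False_ind _ (h h')) end).
  pose H := bf @` [set V | G V /\ exists2 b0, B b0 & Xn `\` b0 = V].
  have Hf : finite_set H.
    by apply: finite_image; apply: (fin_subT Gf) => V [].
  have HB : H `<=` B by move=> b [V [_ h] <-]; case: (hbf V h).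
  have := hX _ (gen_ideal_bigcup _ _ Hf HB); rewrite /almost_sub.
  apply: sub_infinite_set => x [Xx nHx] V GV.
  case: (GF V GV) => [h|->//].
  have [_ e] := hbf V h; rewrite -e; split => //.
  by move=> bx; apply: nHx; exists (bf V) => //; exists V.
have [Q [Qinf QF]] := pc F ltF infF sfip.
have QX : finite_set (Q `\` Xn) by apply: QF; right.
exists (Q `&` Xn); split.
- by move=> x [].
- move=> Pf; apply: Qinf; apply: (fin_sub (finU Pf QX)).
  by move=> x Qx; have [Xx|nXx] := pselect (Xn x); [left|right].
- move=> b Bb; apply: (fin_sub (QF _ (or_introl (ex_intro2 _ _ b Bb erefl)))).
  by move=> x [[Qx Xx] bx]; split => // -[].
Qed.

Definition hypo (B : set (set nat)) (X : nat -> set nat) :=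
  (forall n, infinite_set (X n)) /\
  (forall Y, gen_ideal B Y -> finite_set [set n | almost_sub (X n) Y]).

Definition goodN (B : set (set nat)) (X : nat -> set nat) (N : set nat) :=
  [/\ infinite_set N, (forall b, B b -> finite_set (N `&` b)) &
      (forall n, X n `&` N !=set0)].

Lemma step_exists (pc : p_eq_c) B X : AD B -> lt_continuum B -> hypo B X ->
  exists N, goodN B X N.
Proof.
move=> [_ adB] ltB [Xinf hX].
pose bad n := exists Y, gen_ideal B Y /\ almost_sub (X n) Y.
have hGK0 : forall n, exists GK : set (set nat) * set nat, bad n ->
    [/\ finite_set GK.1, GK.1 `<=` B, finite_set GK.2 &
        X n `<=` (\bigcup_(b in GK.1) b) `|` GK.2].
  move=> n; case: (pselect (bad n)) => [[Y [[G [K [Gf GB Kf YGK]]] aY]]|nb];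
    last by exists (set0, set0).
  exists (G, K `|` (X n `\` Y)) => _ /=; split => //; first exact: finU.
  move=> x Xx; have [Yx|nYx] := pselect (Y x).
    by case: (YGK x Yx) => h; [left | right; left].
  by right; right.
have [GK hGK] := choiceP _ _ _ hGK0.
pose Gs n := (GK n).1.
pose S n := [set b | Gs n b /\ infinite_set (X n `&` b)].
have finNS : forall n c, Gs n c -> ~ S n c -> finite_set (X n `&` c).
  move=> n c Gc nS; have [//|h] := pselect (finite_set (X n `&` c)).
  by exfalso; apply: nS; split.
have Sne : forall n, bad n -> exists b, S n b.
  move=> n bn; have [//|h] := pselect (exists b, S n b); exfalso.
  have [Gf GB Kf XGK] := hGK n bn.
  have Ff : forall c, (GK n).1 c -> finite_set (X n `&` c).
    move=> c Gc; apply: finNS Gc _ => Sc; apply: h; by exists c.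
  apply: (Xinf n).
  apply: (fin_sub (finU (@bigcup_finite _ _ (GK n).1 (fun c => X n `&` c) Gf Ff) Kf)).
  move=> x Xx; case: (XGK x Xx) => [[c Gc cx]|Kx]; last by right.
  by left; exists c.
have htau0 : forall b, exists t, (exists m, bad m /\ Gs m b) ->
   [/\ bad t, Gs t b & forall m, bad m -> Gs m b -> (t <= m)%N].
  move=> b; case: (pselect (exists m, bad m /\ Gs m b)) => [h|h];
    last by exists 0%N.
  have [t [[bt Gt] mt]] := nat_min _ h.
  by exists t => _; split => // m bm Gm; exact: mt m (conj bm Gm).
have [tau htau] := choiceP _ _ _ htau0.
have hBn0 : forall n, exists b, bad n ->
    S n b /\ forall b', S n b' -> (tau b' <= tau b)%N.
  move=> n; case: (pselect (bad n)) => [bn|nb]; last by exists set0.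
  have tle : forall b', S n b' -> (tau b' <= n)%N.
    move=> b' [Gb' _]; have [_ _ h] := htau b' (ex_intro _ n (conj bn Gb')).
    exact: h n bn Gb'.
  have h1 : forall y, (fun v => exists b, S n b /\ tau b = v) y -> (y <= n)%N.
    by move=> y [b [Sb <-]]; exact: tle.
  have h2 : exists x, (fun v => exists b, S n b /\ tau b = v) x.
    by have [b Sb] := Sne n bn; exists (tau b), b.
  have [v [[b [Sb vb]] vmax]] := nat_max _ _ h1 h2.
  exists b => _; split => // b' Sb'; rewrite vb; apply: vmax; by exists b'.
have [Bn hBn] := choiceP _ _ _ hBn0.
have hP0 : forall n, exists P : set nat, [/\ P `<=` X n, infinite_set P &
    forall b, B b -> (bad n -> b <> Bn n) -> finite_set (P `&` b)].
  move=> n; case: (pselect (bad n)) => [bn|nb].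
    have [[GBn infI] _] := hBn n bn.
    have [_ GB _ _] := hGK n bn.
    exists (X n `&` Bn n); split => //; try by move=> x [].
    move=> b Bb /(_ bn) ne.
    apply: (fin_sub (adB _ _ (GB _ GBn) Bb (fun e => ne (esym e)))).
    by move=> x [[_ h1] h2].
  have hgood : forall Y, gen_ideal B Y -> ~ almost_sub (X n) Y.
    by move=> Y gY aY; apply: nb; exists Y.
  have [P [PX Pinf PB]] := good_piece pc B (X n) ltB hgood.
  by exists P; split => // b Bb _; exact: PB.
have [Pn hPn] := choiceP _ _ _ hP0.
have hf0 : forall b, exists fb : nat -> nat, forall n,
    finite_set (Pn n `&` b) -> forall x, Pn n x -> b x -> (x < fb n)%N.
  move=> b; apply: (choiceP _ _ (fun n m => finite_set (Pn n `&` b) -> forall x, Pn n x -> b x -> (x < m)%N)) => n.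
  case: (pselect (finite_set (Pn n `&` b))) => [h|h]; last by exists 0%N.
  have [m hm] := fin_bound _ h; exists m => _ x Px bx; exact: hm x (conj Px bx).
have [f hf] := choiceP _ _ _ hf0.
have [g hg] := dominate pc B f ltB.
have ha0 : forall n, exists a, Pn n a /\ (g n + n <= a)%N.
  move=> n; have [_ Pinf _] := hPn n.
  have [x [gx Px]] := inf_unbounded _ Pinf (g n + n); by exists x.
have [a ha] := choiceP _ _ _ ha0.
exists (range a); split.
- apply: unbounded_inf => m; exists (a m); split; last by exists m.
  exact: leq_trans (leq_addl _ _) (ha m).2.
- move=> b Bb.
  have [Nb hNb] := hg b Bb.
  pose Tb := [set n | bad n /\ Bn n = b].
  have Tbf : finite_set Tb.
    case: (pselect (exists m, bad m /\ Gs m b)) => [hb|hb]; last first.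
      apply: (fin_sub (@finite_set0 nat)) => n [bn e]; apply: hb; exists n.
      by split => //; rewrite -e; exact: (hBn n bn).1.1.
    have [bt Gtb tmin] := htau b hb.
    pose W := \bigcup_(m in [set m | (m <= tau b)%N /\ bad m]) Gs m.
    have Wf : finite_set W.
      apply: bigcup_finite.
        by apply: (fin_sub (finite_II (tau b).+1)) => m [mt _].
      by move=> m [_ bm]; have [] := hGK m bm.
    have WB : W `<=` B.
      by move=> c [m [_ bm] Gc]; have [_ GB _ _] := hGK m bm; exact: GB _ Gc.
    have gW := gen_ideal_bigcup _ _ Wf WB.
    apply: (fin_sub (hX _ gW)) => n [bn e].
    have [Gf _ Kf XGK] := hGK n bn.
    have Df : finite_set [set c | Gs n c /\ ~ S n c].
      by apply: (fin_subT Gf) => c [].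
    have Ff : forall c, [set c | Gs n c /\ ~ S n c] c -> finite_set (X n `&` c).
      by move=> c [h1 h2]; exact: finNS h1 h2.
    apply: (fin_sub (finU Kf (@bigcup_finite _ _ _ (fun c => X n `&` c) Df Ff))).
    move=> x [Xx nWx]; case: (XGK x Xx) => [[c Gc cx]|Kx]; last by left.
    right; exists c; last by split.
    split => // Sc; apply: nWx; exists c => //.
    have [bt' Gt' _] := htau c (ex_intro _ n (conj bn Gc)).
    exists (tau c) => //; split => //.
    by have := (hBn n bn).2 c Sc; rewrite e.
  apply: (fin_sub (finite_image a (finU (finite_II Nb) Tbf))).
  move=> x [[n _ <-] bx].
  have [nN|Nn] := ltnP n Nb; first by exists n => //; left.
  have [Tn|nT] := pselect (Tb n); first by exists n => //; right.
  exfalso; have [_ _ PB] := hPn n.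
  have fin := PB b Bb (fun bn e => nT (conj bn (esym e))).
  have h1 := hf b n fin (a n) (ha n).1 bx.
  have h2 := hNb n Nn.
  have := leq_trans (leq_trans (ltn_trans h1 h2) (leq_addr n (g n))) (ha n).2.
  by rewrite ltnn.
- move=> n; have [PX _ _] := hPn n; exists (a n); split; first exact: PX _ (ha n).1.
  by exists n.
Qed.

Lemma good_order : exists lt : set nat -> set nat -> Prop,
  [/\ well_founded lt, (forall x y, x <> y -> lt x y \/ lt y x) &
      forall t, lt_continuum [set s | lt s t]].
Proof.
have [R Rwo] := well_ordering_principle (set nat).
have woC : wo_chain R predT by move=> A _; exact: Rwo.
have Rtot := wo_chainW woC.
have Rant := wo_chain_antisymmetric woC.
have wmin : forall P : set nat -> Prop, (exists x, P x) ->
    exists z, P z /\ forall x, P x -> R z x.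
  move=> P [x Px]; have [|z [[zin zlb] _]] := Rwo [pred y | `[< P y >]].
    by rewrite /wochoice.nonempty; exists x; apply/asboolP.
  exists z; split; first by move: zin => /asboolP.
  by move=> y Py; apply: zlb; apply/asboolP.
have antis : forall x y, R x y -> R y x -> x = y.
  by move=> x y h1 h2; apply: Rant => //; rewrite h1 h2.
pose lt x y := R x y /\ x <> y.
have tri : forall x y, x <> y -> lt x y \/ lt y x.
  move=> x y ne; have := Rtot x y isT isT; case/orP => h; [left|right]; split => //.
  by move=> e; apply: ne.
have wf : well_founded lt.
  move=> a; have [//|na] := pselect (Acc lt a).
  have [z [nz zmin]] := wmin (fun x => ~ Acc lt x) (ex_intro _ a na).
  exfalso; apply: nz; constructor => y [Ryz neyz].
  have [//|ny] := pselect (Acc lt y).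
  by have := antis _ _ Ryz (zmin y ny).
have [allsmall|] := pselect (forall t, lt_continuum [set s | lt s t]).
  by exists lt.
move=> /existsNP hex.
have [t0 [nt0 t0min]] := wmin _ hex.
have [e [einj ein]] : exists e : set nat -> set nat, injective e /\ forall X, lt (e X) t0.
  by apply: contra_notP nt0 => H; move=> H'; apply: H; exact: H'.
pose lt' x y := lt (e x) (e y).
exists lt'; split.
- have accinv : forall a, Acc lt a -> forall x, e x = a -> Acc lt' x.
    move=> a; elim=> b _ IH x hx; constructor => y hy.
    by apply: (IH (e y)) => //; rewrite -hx.
  by move=> x; apply: (accinv (e x)).
- move=> x y ne; apply: tri => exy; apply: ne; exact: einj.
- move=> t [k [kinj kin]].
  have small : lt_continuum [set s | lt s (e t)].
    have [//|ns] := pselect (lt_continuum [set s | lt s (e t)]).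
    have [Ret net] := ein t.
    by exfalso; apply: net; apply: antis Ret (t0min _ ns).
  apply: small; exists (fun X => e (k X)); split; last by move=> X; exact: kin X.
  by move=> X Y /einj /kinj.
Qed.

Definition decode (Z : set nat) (n : nat) : set nat :=
  [set m | Z (Cantor.to_nat (n, m))].

Definition step (B : set (set nat)) (Z : set nat) : set nat :=
  match pselect (exists N, goodN B (decode Z) N) with
  | left h => projT1 (cid h)
  | right _ => set0
  end.

Lemma step_spec B Z : infinite_set (step B Z) -> goodN B (decode Z) (step B Z).
Proof.
rewrite /step; case: pselect => [h|_]; first by case: (cid h).
by move=> /(_ (@finite_set0 nat)).
Qed.

Lemma step_inf (pc : p_eq_c) B Z : AD B -> lt_continuum B -> hypo B (decode Z) ->
  infinite_set (step B Z).
Proof.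
move=> adB ltB hB; rewrite /step; case: pselect => [h|nh].
  by case: (cid h) => N [].
by exfalso; apply: nh; exact: step_exists.
Qed.

Lemma AD_sub (F G : set (set nat)) : F `<=` G -> AD G -> AD F.
Proof.
move=> FG [h1 h2]; split; first by move=> a /FG /h1.
by move=> a b /FG Fa /FG Fb; apply: h2.
Qed.

Lemma gen_ideal_mono (F G : set (set nat)) Y : F `<=` G -> gen_ideal F Y -> gen_ideal G Y.
Proof.
move=> FG [G0 [K [G0f G0F Kf YGK]]]; exists G0, K; split => //.
exact: subset_trans G0F FG.
Qed.

Lemma fin_inter_ideal (M : set (set nat)) (Y W : set nat) :
  (forall b, M b -> finite_set (Y `&` b)) -> gen_ideal M W -> finite_set (Y `&` W).
Proof.
move=> hY [G0 [K [G0f G0M Kf WGK]]].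
have Ff : forall b, G0 b -> finite_set (Y `&` b) by move=> b Gb; apply: hY; exact: G0M.
apply: (fin_sub (finU (@bigcup_finite _ _ G0 (fun b => Y `&` b) G0f Ff) Kf)).
move=> x [Yx Wx]; case: (WGK x Wx) => [[b Gb bx]|Kx]; last by right.
by left; exists b.
Qed.

Theorem mainTheorem10 :
  p_eq_c ->
  forall A : set (set nat), AD A -> lt_continuum A ->
    exists M : set (set nat), A `<=` M /\ MAD M /\ strongly_tight M.
Proof.
move=> pc A adA ltA.
have [lt [wf tri small]] := good_order.
pose F t (rec : forall s, lt s t -> set nat) :=
  step (A `|` [set Y | exists s (H : lt s t), Y = rec s H /\ infinite_set Y]) t.
pose h := Fix wf (fun _ => set nat) F.
pose Bt t := A `|` [set Y | exists s, lt s t /\ Y = h s /\ infinite_set Y].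
have hE : forall t, h t = step (Bt t) t.
  move=> t; rewrite /h Fix_eq; last first.
    move=> x f g e; have -> // : f = g.
    apply: functional_extensionality_dep => y.
    by apply: functional_extensionality_dep => p; exact: e.
  rewrite /F /Bt; congr (step (A `|` _) t); apply/seteqP; split => Y.
    by move=> [s [H [e1 inf]]]; exists s.
  by move=> [s [H [e1 inf]]]; exists s, H.
pose M := A `|` [set Y | exists t, Y = h t /\ infinite_set Y].
have hspec : forall t, infinite_set (h t) -> goodN (Bt t) (decode t) (h t).
  by move=> t; rewrite hE; apply: step_spec.
have BtM : forall t, Bt t `<=` M.
  by move=> t Y [Ay|[s [_ [e inf]]]]; [left | right; exists s].
have adM : AD M.
  split.
    by move=> Y [Ay|[t [-> inf]]] //; exact: adA.1.
  have key : forall a t, Bt t a -> infinite_set (h t) -> finite_set (a `&` h t).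
    move=> a t Ba inf; have [_ hB _] := hspec t inf; rewrite setIC; exact: hB.
  move=> X Y [AX|[s [-> infs]]] [AY|[t [-> inft]]] ne.
  - exact: adA.2.
  - by apply: key inft; left.
  - by rewrite setIC; apply: key infs; left.
  - have [est|nst] := pselect (s = t); first by exfalso; apply: ne; rewrite est.
    case: (tri s t nst) => lst.
      by apply: key inft; right; exists s.
    by rewrite setIC; apply: key infs; right; exists t.
have adBt : forall t, AD (Bt t) by move=> t; exact: AD_sub (BtM t) adM.
have ltBt : forall t, lt_continuum (Bt t).
  move=> t; apply: ltc_union => //.
  apply: (ltc_sub _ (h @` [set s | lt s t])); last exact: ltc_image.
  by move=> Y [s [ls [-> _]]]; exists s.
have stM : strongly_tight M.
  move=> X Xinf hX.
  pose Z := [set p | X (Cantor.of_nat p).1 (Cantor.of_nat p).2].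
  have dZ : decode Z = X.
    apply/funext => n; apply/funext => m.
    by rewrite /decode /Z /= Cantor.cancel_of_to.
  have hyp : hypo (Bt Z) (decode Z).
    rewrite dZ; split => // Y gY; apply: hX; exact: gen_ideal_mono (BtM Z) gY.
  have inf : infinite_set (h Z) by rewrite hE; apply: step_inf.
  have [_ _ meet] := hspec Z inf.
  exists (h Z); split.
    apply: gen_ideal1; right; by exists Z.
  by move=> n; rewrite -dZ; exact: meet.
have madM : MAD M.
  split => // G adG MG; apply/seteqP; split => // Y GY.
  have [//|nMY] := pselect (M Y); exfalso.
  have Yinf := adG.1 Y GY.
  have hY : forall b, M b -> finite_set (Y `&` b).
    move=> b Mb; apply: adG.2 => //; first exact: MG.
    by move=> e; apply: nMY; rewrite e.
  pose X n := Y `\` `I_n.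
  have Xinf : forall n, infinite_set (X n).
    by move=> n; apply: infinite_setD => //; exact: finite_II.
  have [W [gW meet]] : exists W, gen_ideal M W /\ forall n, X n `&` W !=set0.
    apply: stM => // W gW.
    apply: (fin_sub (@finite_set0 nat)) => n aW; apply: (Xinf n).
    apply: (fin_sub (finU aW (fin_inter_ideal _ _ _ hY gW))).
    move=> x [Yx nx]; have [Wx|nWx] := pselect (W x).
      by right; split.
    by left; split.
  have [m hm] := fin_bound _ (fin_inter_ideal _ _ _ hY gW).
  have [x [[Yx nx] Wx]] := meet m.
  by apply: nx; apply: hm; split.
exists M; split => //; first by move=> a Aa; left.
Qed.
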